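(* The absolute random order ratio of Best Fit satisfies $RR_{\mathrm{BF}} \ge 1.30$.
   Context: Bin packing: given a list $I=(x_1,\ldots,x_n)$ of items with sizes in $(0,1]$, a packing assigns items to unit-capacity bins so that the total size of items in each bin is at most $1$. $\mathrm{OPT}(I)$ denotes the minimum number of bins in a feasible packing. The online algorithm Best Fit (BF) processes the items in the given order and packs the current item into the fullest bin (largest current load) into which it fits, opening a new bin if it fits into no existing bin; items are never moved. $\mathrm{BF}(I)$ denotes the number of bins Best Fit uses on list $I$. For $\sigma\in\mathcal{S}_n$ (permutations of $[n]$), $I^\sigma=(x_{\sigma(1)},\ldots,x_{\sigma(n)})$. With $\mathcal{I}$ the set of all finite item lists and $\sigma$ uniformly random in $\mathcal{S}_n$, the absolute random order ratio is $$RR_{\mathrm{BF}}=\sup_{I\in\mathcal{I}}\frac{\mathbb{E}[\mathrm{BF}(I^\sigma)]}{\mathrm{OPT}(I)}.$$ *)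

(* Defs.v *)
From HB Require Import structures.
From mathcomp Require Import all_boot all_order all_algebra.
From mathcomp Require Import fingroup perm.
From mathcomp Require Import reals.
Set Implicit Arguments. Unset Strict Implicit. Unset Printing Implicit Defensive.
Import Order.TTheory GRing.Theory Num.Theory.
Local Open Scope ring_scope.

Section BinPacking.
Variable R : realType.

Definition valid_items (I : seq R) : bool := all (fun x => (0 < x) && (x <= 1)) I.

(* State of Best Fit: the sequence of current bin loads (in opening order). *)

Fixpoint add_to_first (s : seq R) (m x : R) : seq R :=
  match s with
  | [::] => [::]
  | l :: s' => if l == m then (l + x) :: s' else l :: add_to_first s' m x
  end.

(* One Best Fit step: among the bins into which x fits (load + x <= 1),
   put x into one of largest load; if none, open a new bin.  (Ties are
   broken by lowest index; this does not affect the number of bins.) *)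
Definition bf_step (s : seq R) (x : R) : seq R :=
  let f := [seq l <- s | l + x <= 1] in
  if f is l0 :: _ then add_to_first s (foldl Num.max l0 f) x
  else rcons s x.

Definition BF (I : seq R) : nat := size (foldl bf_step [::] I).

Definition packable (I : seq R) (k : nat) : bool :=
  [exists f : {ffun 'I_(size I) -> 'I_k},
     [forall j : 'I_k, \sum_(i < size I | f i == j) nth 0 I i <= 1]].

(* OPT I = least k with I packable into k bins (searched in 0..size I;
   for valid I, k = size I always works, so this is the true minimum). *)
Definition OPT (I : seq R) : nat := find (packable I) (iota 0 (size I).+1).

Definition permute (I : seq R) (s : 'S_(size I)) : seq R :=
  [seq nth 0 I (s i) | i <- enum 'I_(size I)].


Definition E_BF (I : seq R) : R :=
  (\sum_(s : 'S_(size I)) (BF (@permute I s))%:R) / ((size I)`!)%:R.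

Definition rr_ratio (I : seq R) : R := E_BF I / (OPT I)%:R.

End BinPacking.

(* Main.v *)
Require Import Defs.
From HB Require Import structures.
From mathcomp Require Import all_boot all_order all_algebra.
From mathcomp Require Import fingroup perm.
From mathcomp Require Import reals.
From mathcomp Require Import lra zify.
Import Order.TTheory GRing.Theory Num.Theory.
Set Implicit Arguments. Unset Strict Implicit. Unset Printing Implicit Defensive.

Lemma ex_perm2 n (i0 i1 j k : 'I_n) : i0 != i1 -> j != k ->
  exists p : 'S_n, p i0 = j /\ p i1 = k.
Proof.
move=> h01 hjk.
set a := tperm i0 j i1.
have haj : a != j.
  apply/negP => /eqP ha.
  have : tperm i0 j i1 = tperm i0 j i0 by rewrite tpermL.
  by move/perm_inj => /eqP; rewrite eq_sym (negbTE h01).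
exists (tperm i0 j * tperm a k)%g; rewrite !permM tpermL; split.
  by rewrite tpermD // eq_sym.
by rewrite -/a tpermL.
Qed.

Lemma sum_perm_pair n (F : 'I_n -> 'I_n -> nat) (i0 i1 : 'I_n) : i0 != i1 ->
  (\sum_(s : 'S_n) F (s i0) (s i1)) * (\sum_(j : 'I_n) \sum_(k : 'I_n) (if j == k then 0 else 1))
  = n`! * \sum_(j : 'I_n) \sum_(k : 'I_n) (if j == k then 0 else F j k).
Proof.
move=> h01.
set D := fun j k : 'I_n => if j == k then 0 else F j k.
have eD : forall s : 'S_n, F (s i0) (s i1) = D (s i0) (s i1).
  by move=> s; rewrite /D (inj_eq perm_inj) (negbTE h01).
have step1 : forall j k : 'I_n, j != k ->
    \sum_(s : 'S_n) D (s i0) (s i1) = \sum_(s : 'S_n) D (s j) (s k).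
  move=> j k hjk; have [p [hp0 hp1]] := ex_perm2 h01 hjk.
  rewrite (reindex_inj (mulgI p)) /=.
  by apply: eq_bigr => s _; rewrite !permM hp0 hp1.
rewrite (eq_bigr _ (fun s _ => eD s)).
rewrite big_distrr /=.
rewrite (eq_bigr (fun j => \sum_(k < n) \sum_(s : 'S_n) D (s j) (s k))); last first.
  move=> j _; rewrite big_distrr /=; apply: eq_bigr => k _.
  case: eqP => [<-|/eqP hjk]; last by rewrite muln1 (step1 _ _ hjk).
  by rewrite muln0 big1 // => s _; rewrite /D eqxx.
rewrite (eq_bigr (fun j => \sum_(s : 'S_n) \sum_(k < n) D (s j) (s k))); last first.
  by move=> j _; rewrite exchange_big.
rewrite exchange_big /=.
rewrite (eq_bigr (fun _ => \sum_(j < n) \sum_(k < n) D j k)); last first.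
  move=> s _; rewrite [RHS](reindex_inj (@perm_inj _ s)) /=; apply: eq_bigr => j _.
  by rewrite [RHS](reindex_inj (@perm_inj _ s)).
by rewrite sum_nat_const card_Sn.
Qed.

Fixpoint add_to_firstN (s : seq nat) (m x : nat) : seq nat :=
  match s with [::] => [::] | l :: s' => if l == m then (l + x) :: s' else l :: add_to_firstN s' m x end.
Definition bf_stepN (s : seq nat) (x : nat) : seq nat :=
  let f := [seq l <- s | l + x <= 12] in
  if f is l0 :: _ then add_to_firstN s (foldl maxn l0 f) x else rcons s x.
Definition BFN (w : seq nat) := size (foldl bf_stepN [::] w).
Definition In : seq nat := [:: 4; 4; 4; 5; 5].
Definition H (x y : nat) : nat := if x == y then 2 else 3.

Lemma chk : all (fun w => BFN w == H (nth 0 w 0) (nth 0 w 1)) (permutations In).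
Proof. by vm_compute. Qed.

Local Open Scope ring_scope.

Section Transfer.
Variable R : realType.
Definition fr (n : nat) : R := n%:R / 12%:R.

Lemma fr12 : (0 : R) < 12%:R^-1. Proof. by rewrite invr_gt0 ltr0n. Qed.

Lemma fr_add a b : fr (a + b) = fr a + fr b.
Proof. by rewrite /fr natrD mulrDl. Qed.

Lemma fr_le1 n : (fr n <= 1) = (n <= 12)%N.
Proof. by rewrite /fr ler_pdivrMr ?ltr0n // mul1r ler_nat. Qed.

Lemma fr_le a b : (fr a <= fr b) = (a <= b)%N.
Proof. by rewrite /fr ler_pM2r ?fr12 // ler_nat. Qed.

Lemma fr_inj : injective fr.
Proof.
move=> a b /(mulIf _) h; apply/eqP; rewrite -(eqr_nat R) h //.
by rewrite invr_eq0 pnatr_eq0.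
Qed.

Lemma fr_max a b : fr (maxn a b) = Num.max (fr a) (fr b).
Proof.
case: (leqP a b) => h.
  by rewrite max_r // fr_le.
by rewrite max_l // fr_le ltnW.
Qed.

Lemma foldl_max l0 t : foldl Num.max (fr l0) (map fr t) = fr (foldl maxn l0 t).
Proof. by elim: t l0 => //= x t IH l0; rewrite -fr_max IH. Qed.

Lemma add_first s m x : add_to_first (map fr s) (fr m) (fr x) = map fr (add_to_firstN s m x).
Proof.
elim: s => //= l s IH; rewrite (inj_eq fr_inj); case: eqP => _ /=.
  by rewrite fr_add.
by rewrite IH.
Qed.

Lemma step s x : bf_step (map fr s) (fr x) = map fr (bf_stepN s x).
Proof.
rewrite /bf_step /bf_stepN /= filter_map.
have -> : [seq l <- s | preim fr (fun l => l + fr x <= 1) l] = [seq l <- s | (l + x <= 12)%N].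
  by apply: eq_filter => l /=; rewrite -fr_add fr_le1.
case: [seq l <- s | (l + x <= 12)%N] => [|l0 t] /=.
  by rewrite map_rcons.
by rewrite -fr_max foldl_max add_first.
Qed.

Lemma bfN s0 w : foldl (@bf_step R) (map fr s0) (map fr w) = map fr (foldl bf_stepN s0 w).
Proof. by elim: w s0 => //= x w IH s0; rewrite step IH. Qed.

Lemma BF_fr w : BF (map fr w) = BFN w.
Proof. by rewrite /BF /BFN -(size_map fr) -bfN. Qed.

Lemma sum_nth_fr (s : seq nat) (P : pred 'I_(size (map fr s))) :
  \sum_(i < size (map fr s) | P i) nth 0 (map fr s) i =
  fr (\sum_(i < size (map fr s) | P i) nth 0%N s i).
Proof.
rewrite /fr natr_sum mulr_suml; apply: eq_bigr => i _.
by rewrite (nth_map 0%N) // -(size_map fr) ltn_ord.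
Qed.

End Transfer.

Lemma BFN_perm (s : 'S_5) :
  BFN [seq nth 0%N In (s i) | i <- enum 'I_5] =
  H (nth 0%N In (s ord0)) (nth 0%N In (s (@Ordinal 5 1 isT))).
Proof.
set w := [seq nth 0%N In (s i) | i <- enum 'I_5].
have hw : w \in permutations In.
  rewrite mem_permutations; apply/(perm_iotaP 0%N).
  exists (map (val \o s) (enum 'I_5)); last by rewrite /w -map_comp.
  rewrite map_comp -val_enum_ord perm_map // uniq_perm ?enum_uniq //.
    by rewrite map_inj_uniq ?enum_uniq //; apply: perm_inj.
  move=> i; rewrite [RHS]mem_enum; apply/mapP; exists (s^-1 i)%g.
    by rewrite mem_enum.
  by rewrite permKV.
have := allP chk w hw => /eqP ->.
have e0 : nth ord0 (enum (ordinal 5)) 0 = ord0 := nth_ord_enum ord0 ord0.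
have e1 : nth ord0 (enum (ordinal 5)) 1 = @Ordinal 5 1 isT := nth_ord_enum ord0 (@Ordinal 5 1 isT).
have sz : size (enum (ordinal 5)) = 5%N := size_enum_ord 5.
rewrite /w !(nth_map ord0); try by rewrite sz.
f_equal; do 3 f_equal; rewrite -?enumT ?size_enum_ord //.
all: by move: sz; rewrite enumT => ->.
Qed.

Lemma sum_BFN : \sum_(s : 'S_5) BFN [seq nth 0%N In (s i) | i <- enum 'I_5] = 312%N.
Proof.
rewrite (eq_bigr _ (fun s _ => BFN_perm s)).
have := @sum_perm_pair 5 (fun j k => H (nth 0%N In j) (nth 0%N In k)) ord0 (@Ordinal 5 1 isT) isT.
rewrite !big_ord_recr !big_ord0 /H /= => h.
have f5 : 5`! = 120%N by []. rewrite f5 in h. move: h. set X := (\sum_(s : _) _). move=> h. have h2 : (X * 20 = 6240)%N := h. lia.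
Qed.

Lemma sum_fr (R : realType) (s : seq nat) : \sum_(x <- s) fr R x = fr R (sumn s).
Proof.
elim: s => [|x s IH]; first by rewrite big_nil /fr mul0r.
by rewrite big_cons IH fr_add.
Qed.

Section Main.
Variable R : realType.
Let I := map (fr R) In.

Lemma pk0 : packable I 0 = false.
Proof. by apply/existsP => -[g _]; case: (g ord0). Qed.

Lemma pk1 : packable I 1 = false.
Proof.
apply/existsP => -[g /forallP /(_ ord0)].
rewrite sum_nth_fr fr_le1.
rewrite (eq_bigl xpredT); last by move=> i; rewrite [g i]ord1 eqxx.
by rewrite !big_ord_recr big_ord0.
Qed.

Lemma pk2 : packable I 2.
Proof.
apply/existsP.
exists [ffun i : 'I_(size I) => if (i < 3)%N then (ord0 : 'I_2) else ord_max].
apply/forallP => j; rewrite sum_nth_fr fr_le1 big_mkcond.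
rewrite !big_ord_recr big_ord0 /= !ffunE /=.
by case: j => [[|[|]]].
Qed.

Lemma OPT_I : OPT I = 2%N.
Proof.
rewrite /OPT.
have -> : iota 0 (size I).+1 = [:: 0; 1; 2; 3; 4; 5]%N by [].
by rewrite /= pk0 pk1 pk2.
Qed.

Lemma E_BF_I : E_BF I = 312%:R / 120%:R.
Proof.
rewrite /E_BF -natr_sum.
have -> : (size I)`! = 120%N by [].
congr (_%:R / _).
rewrite -[RHS]sum_BFN.
apply: eq_bigr => s _.
rewrite -(BF_fr R); congr BF.
rewrite /permute -map_comp; apply: eq_map => i /=.
by rewrite (nth_map 0%N) // -(size_map (fr R)) ltn_ord.
Qed.

End Main.

Theorem theorem5 (R : realType) (c : R) :
  c < 13%:R / 10%:R ->
  exists I : seq R, [/\ valid_items I, (0 < size I)%N & c < rr_ratio I].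
Proof.
move=> hc; exists (map (fr R) In); split => //.
  rewrite /valid_items /= /fr.
  by rewrite !divr_gt0 ?ltr0n // !ler_pdivrMr ?ltr0n // !mul1r !ler_nat.
rewrite /rr_ratio E_BF_I OPT_I.
have -> : (312%:R / 120%:R / 2%:R : R) = 13%:R / 10%:R.
  by rewrite -mulrA -invfM -!natrM; apply/eqP; rewrite eqr_div ?pnatr_eq0 // -!natrM.
exact: hc.
Qed.
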